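(* Let $d\ge2$ and $i\in\{0,\dots,d-1\}$. Let $(X,\omega)=\#^d_{t_h+it_v}\mathbb{T}^2$ be a $d$-symmetric differential with twist coordinate $[t_h+it_v]\in\mathbb{T}^2_d$. If $(X,\omega)\in\mathscr{C}_i$, then the horizontal foliation of $(X,\omega)$ contains $(i,d)$ maximal cylinders of width $\frac{d}{(i,d)}$ and $(i+1,d)$ maximal cylinders of width $\frac{d}{(i+1,d)}$. If $(X,\omega)\in\partial^{btm}\mathscr{C}_i$, then its horizontal foliation contains $(i,d)$ cylinders of width $\frac{d}{(i,d)}$.
   Context: $(a,d)=\gcd(a,d)$ with $(0,d)=d$. $\mathbb{T}^2=\mathbb{C}/(\mathbb{Z}\oplus\mathbb{Z}i)$, $\mathbb{T}^2_d=\mathbb{C}/d(\mathbb{Z}\oplus\mathbb{Z}i)$. $\#^d_v\mathbb{T}^2$ is obtained by taking $d$ copies of $\mathbb{T}^2$, slitting each along the image of $[0,v]$ and gluing one side of the slit on copy $j$ to the opposite side on copy $j+1\bmod d$ (by limits for non-injective segments); the map $t_h+it_v\mapsto\#^d_{t_h+it_v}\mathbb{T}^2$ descends to twist coordinates on $\mathbb{T}^2_d$, which (minus the integer lattice points) parametrizes the modular fiber $\mathscr{F}^{sym}_d$ of $d$-symmetric differentials over $\mathbb{T}^2$. The horizontal foliation of $\mathscr{F}^{sym}_d\cong\mathbb{T}^2_d$ consists of the $d$ open cylinders $\mathscr{C}_i=\{[t_h+it_v]:\lfloor t_v\rfloor\equiv i \bmod d,\ t_v\notin\mathbb{Z}\}$,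 $i=0,\dots,d-1$, each of width $d$ and height $1$, with bottom boundaries $\partial^{btm}\mathscr{C}_i=\{[t_h+it_v]:t_v\equiv i\bmod d\}$ (minus lattice points). *)

(* Defs.v *)
From Stdlib Require Import Reals ZArith Arith List Relations.
Open Scope R_scope.

(* A point of #^d_v T^2 is represented by a sheet index (an integer, read
   modulo d) together with a representative (x,y) in R^2 of a point of
   T^2 = C/(Z + Zi). *)
Record pt := Pt { sheet : Z; px : R; py : R }.

Definition isZ (r : R) : Prop := exists n : Z, r = IZR n.

Definition same_pt (d : nat) (P Q : pt) : Prop :=
  Z.modulo (sheet P - sheet Q) (Z.of_nat d) = 0%Z /\
  isZ (px P - px Q) /\ isZ (py P - py Q).

Definition on_slit (th tv x y : R) : Prop :=
  exists (s : R) (m1 m2 : Z),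
    0 <= s <= 1 /\ x = s * th + IZR m1 /\ y = s * tv + IZR m2.

(* (x,y) is (the image of) an endpoint of the slit (the cone points). *)
Definition is_sing (th tv x y : R) : Prop :=
  (isZ x /\ isZ y) \/ (isZ (x - th) /\ isZ (y - tv)).

Definition hcross (th tv x y t : R) (c : Z * Z * R) : Prop :=
  let '(m1, m2, tau) := c in
  0 < tau < t /\
  exists s, 0 < s < 1 /\ x + tau = s * th + IZR m1 /\ y = s * tv + IZR m2.

(* The horizontal segment avoids the cone points and does not run along the
   slit (the latter can only happen when the slit is horizontal). *)
Definition hpath_ok (th tv x y t : R) : Prop :=
  (forall tau, 0 <= tau <= t -> ~ is_sing th tv (x + tau) y) /\
  (tv = 0 -> forall tau, 0 <= tau <= t -> ~ on_slit th tv (x + tau) y).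

(* Crossing the slit from its left side to its right side moves from copy j
   to copy j+1; a rightward horizontal crossing does so iff tv > 0. *)
Definition sgnZ (r : R) : Z :=
  match Rlt_dec 0 r with left _ => 1%Z | right _ => (-1)%Z end.

Definition hmove (th tv : R) (P : pt) (t : R) (Q : pt) : Prop :=
  0 <= t /\
  ~ on_slit th tv (px P) (py P) /\ ~ on_slit th tv (px P + t) (py P) /\
  hpath_ok th tv (px P) (py P) t /\
  exists l : list (Z * Z * R),
    NoDup l /\ (forall c, In c l <-> hcross th tv (px P) (py P) t c) /\
    Q = Pt (sheet P + sgnZ tv * Z.of_nat (length l))%Z (px P + t) (py P).

Definition reg_closed (d : nat) (th tv : R) (P : pt) : Prop :=
  ~ on_slit th tv (px P) (py P) /\
  exists T Q, 0 < T /\ hmove th tv P T Q /\ same_pt d Q P.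

Definition leaf_width (d : nat) (th tv : R) (P : pt) (w : R) : Prop :=
  0 < w /\ (exists Q, hmove th tv P w Q /\ same_pt d Q P) /\
  forall t Q, 0 < t < w -> hmove th tv P t Q -> ~ same_pt d Q P.

Definition vmove (d : nat) (th tv : R) (P Q : pt) : Prop :=
  sheet Q = sheet P /\ px Q = px P /\
  forall y, Rmin (py P) (py Q) <= y <= Rmax (py P) (py Q) ->
    reg_closed d th tv (Pt (sheet P) (px P) y).

Definition cyl_step (d : nat) (th tv : R) (P Q : pt) : Prop :=
  reg_closed d th tv P /\ reg_closed d th tv Q /\
  (same_pt d P Q \/ (exists t, hmove th tv P t Q) \/ vmove d th tv P Q).

Definition same_cyl (d : nat) (th tv : R) : relation pt :=
  clos_refl_sym_trans pt (cyl_step d th tv).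

(* cs lists the maximal horizontal cylinders of #^d_v T^2, each given by a
   representative point and its width (circumference): every regular point is
   in the cylinder of exactly one listed representative. *)
Definition horizontal_cylinders (d : nat) (th tv : R) (cs : list (pt * R)) : Prop :=
  (forall c, In c cs -> reg_closed d th tv (fst c) /\ leaf_width d th tv (fst c) (snd c)) /\
  ForallOrdPairs (fun c c' => ~ same_cyl d th tv (fst c) (fst c')) cs /\
  (forall P, reg_closed d th tv P -> exists c, In c cs /\ same_cyl d th tv P (fst c)).

(* [th + i tv] lies in the open cylinder C_i of F^sym_d = T^2_d. *)
Definition in_Ci (d i : nat) (th tv : R) : Prop :=
  exists n : Z, IZR n < tv < IZR n + 1 /\ Z.modulo n (Z.of_nat d) = Z.of_nat i.

(* [th + i tv] lies in the bottom boundary of C_i (minus lattice points). *)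
Definition in_btm_Ci (d i : nat) (th tv : R) : Prop :=
  (exists n : Z, tv = IZR n /\ Z.modulo n (Z.of_nat d) = Z.of_nat i) /\ ~ isZ th.

(* Main.v *)
Require Import Defs.
From Stdlib Require Import Reals ZArith Arith List Relations Lia Lra Znumtheory.
From Stdlib Require Import ClassicalEpsilon Classical.
Open Scope R_scope.

Lemma gcd_nat_Z (a b : nat) : Z.of_nat (Nat.gcd a b) = Z.gcd (Z.of_nat a) (Z.of_nat b).
Proof.
  revert b. induction a as [a IH] using (well_founded_induction lt_wf). intro b.
  destruct a as [|a'].
  - change (Z.of_nat b = Z.gcd 0 (Z.of_nat b)). rewrite Z.gcd_0_l. lia.
  - set (a := S a') in *.
    rewrite <- (Nat.Lcm0.gcd_mod b a).
    rewrite IH by (apply Nat.mod_upper_bound; lia).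
    rewrite Nat2Z.inj_mod. rewrite Z.gcd_mod_l. apply Z.gcd_comm.
Qed.

Definition fl (x : R) : Z := (up x - 1)%Z.

Lemma fl_spec x : IZR (fl x) <= x < IZR (fl x) + 1.
Proof.
  unfold fl. destruct (archimed x) as [H1 H2]. rewrite minus_IZR. simpl. lra.
Qed.

Lemma fl_unique x z : IZR z <= x < IZR z + 1 -> fl x = z.
Proof.
  intros [H1 H2]. destruct (fl_spec x) as [H3 H4].
  assert (A: (z < fl x + 1)%Z) by (apply lt_IZR; rewrite plus_IZR; simpl; lra).
  assert (B: (fl x < z + 1)%Z) by (apply lt_IZR; rewrite plus_IZR; simpl; lra).
  lia.
Qed.

Lemma fl_shift x m : fl (x + IZR m) = (fl x + m)%Z.
Proof.
  apply fl_unique. rewrite plus_IZR. destruct (fl_spec x). lra.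
Qed.

Lemma fl_IZR z : fl (IZR z) = z.
Proof. apply fl_unique. lra. Qed.

Lemma fl_mono x y : x <= y -> (fl x <= fl y)%Z.
Proof.
  intros H. destruct (fl_spec x), (fl_spec y).
  assert (fl x < fl y + 1)%Z by (apply lt_IZR; rewrite plus_IZR; simpl; lra). lia.
Qed.

Lemma fl_lt_iff x z : (IZR z > x) <-> (fl x < z)%Z.
Proof.
  destruct (fl_spec x) as [F1 F2]. split; intro H.
  - assert (fl x < z)%Z; [|lia]. apply lt_IZR. lra.
  - assert (IZR (fl x + 1) <= IZR z) by (apply IZR_le; lia). rewrite plus_IZR in *. simpl in *. lra.
Qed.

Lemma fl_gt_iff x z : ~ isZ x -> (IZR z < x) <-> (z <= fl x)%Z.
Proof.
  intros nZ. destruct (fl_spec x) as [F1 F2]. split; intro H.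
  - assert (z < fl x + 1)%Z; [|lia]. apply lt_IZR. rewrite plus_IZR. simpl. lra.
  - apply IZR_le in H. destruct (Req_dec (IZR (fl x)) x) as [E|E].
    + exfalso. apply nZ. exists (fl x). lra.
    + lra.
Qed.

Lemma isZ_fl x : isZ x <-> IZR (fl x) = x.
Proof.
  split.
  - intros [n ->]. rewrite fl_IZR. reflexivity.
  - intros H. exists (fl x). lra.
Qed.

Lemma isZ_plus x m : isZ (x + IZR m) <-> isZ x.
Proof.
  split; intros [n Hn].
  - exists (n - m)%Z. rewrite minus_IZR. lra.
  - exists (n + m)%Z. rewrite plus_IZR. lra.
Qed.

Lemma isZ_IZR z : isZ (IZR z).
Proof. exists z; reflexivity. Qed.

Definition zrange (lo hi : Z) : list Z :=
  map (fun k => (lo + 1 + Z.of_nat k)%Z) (seq 0 (Z.to_nat (hi - lo))).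

Lemma In_zrange lo hi z : In z (zrange lo hi) <-> (lo < z <= hi)%Z.
Proof.
  unfold zrange. rewrite in_map_iff. split.
  - intros [k [<- Hk]]. apply in_seq in Hk. lia.
  - intros H. exists (Z.to_nat (z - lo - 1)). split.
    + lia.
    + apply in_seq. lia.
Qed.

Lemma length_zrange lo hi : length (zrange lo hi) = Z.to_nat (hi - lo).
Proof. unfold zrange. rewrite length_map, length_seq. reflexivity. Qed.

Lemma NoDup_map_inj {A B} (f : A -> B) (l : list A) :
  NoDup l -> (forall a b, In a l -> In b l -> f a = f b -> a = b) -> NoDup (map f l).
Proof.
  induction l as [|a l IH]; intros Hn Hi; simpl; constructor.
  - intros Hin. apply in_map_iff in Hin. destruct Hin as [b [Hb Hbin]].
    inversion Hn; subst. assert (b = a) by (apply Hi; simpl; auto). subst. contradiction.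
  - inversion Hn; subst. apply IH; auto. intros; apply Hi; simpl; auto.
Qed.

Lemma NoDup_zrange lo hi : NoDup (zrange lo hi).
Proof.
  unfold zrange. apply NoDup_map_inj. apply seq_NoDup. intros; lia.
Qed.

Lemma zrange_shift lo hi b :
  zrange (lo + b) (hi + b) = map (fun z => (z + b)%Z) (zrange lo hi).
Proof.
  unfold zrange. rewrite map_map.
  replace (hi + b - (lo + b))%Z with (hi - lo)%Z by lia.
  apply map_ext. intros; lia.
Qed.

Fixpoint sumZ {A} (f : A -> Z) (l : list A) : Z :=
  match l with nil => 0%Z | a :: l => (f a + sumZ f l)%Z end.

Lemma sumZ_ext {A} (f g : A -> Z) l : (forall a, In a l -> f a = g a) -> sumZ f l = sumZ g l.
Proof. induction l; simpl; intros H; auto. rewrite H, IHl; auto. Qed.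

Lemma sumZ_map {A B} (f : B -> Z) (g : A -> B) l : sumZ f (map g l) = sumZ (fun a => f (g a)) l.
Proof. induction l; simpl; auto. rewrite IHl; auto. Qed.

Lemma sumZ_plus_const {A} (f : A -> Z) c l :
  sumZ (fun a => f a + c)%Z l = (sumZ f l + c * Z.of_nat (length l))%Z.
Proof. induction l; simpl; [lia|]. rewrite IHl. lia. Qed.

Lemma sumZ_minus {A} (f g : A -> Z) l : sumZ (fun a => f a - g a)%Z l = (sumZ f l - sumZ g l)%Z.
Proof. induction l; simpl; [lia|]. rewrite IHl. lia. Qed.

Lemma length_flat_mapZ {A B} (f : A -> list B) l :
  Z.of_nat (length (flat_map f l)) = sumZ (fun a => Z.of_nat (length (f a))) l.
Proof. induction l; simpl; auto. rewrite length_app. lia. Qed.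

Lemma NoDup_flat_map_disj {A B} (f : A -> list B) (l : list A) :
  NoDup l -> (forall a, In a l -> NoDup (f a)) ->
  (forall a b x, In a l -> In b l -> In x (f a) -> In x (f b) -> a = b) ->
  NoDup (flat_map f l).
Proof.
  induction l as [|a l IH]; intros Hn Hf Hd; simpl; [constructor|].
  inversion Hn; subst. apply NoDup_app.
  - apply Hf; simpl; auto.
  - apply IH; auto. intros; apply Hf; simpl; auto. intros; eapply Hd; simpl; eauto.
  - intros x Hx Hx'. apply in_flat_map in Hx'. destruct Hx' as [b [Hb Hxb]].
    assert (a = b) by (eapply Hd; simpl; eauto). subst. contradiction.
Qed.

Definition Mlo tv y := if Rlt_dec 0 tv then fl (y - tv) else fl y.
Definition Mhi tv y := if Rlt_dec 0 tv then fl y else fl (y - tv).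
Definition Ml tv y := zrange (Mlo tv y) (Mhi tv y).
Definition good tv y := ~ isZ y /\ ~ isZ (y - tv).
Definition qf th tv y m2 := th * ((y - IZR m2) / tv).
Definition kval tv y := (fl y - fl (y - tv))%Z.
Definition Cf th tv x y := sumZ (fun m2 => fl (x - qf th tv y m2)) (Ml tv y).

Lemma In_Ml tv y m2 : good tv y ->
  (In m2 (Ml tv y) <-> exists s, 0 < s < 1 /\ y = s * tv + IZR m2).
Proof.
  intros [g1 g2]. unfold Ml, Mlo, Mhi. rewrite In_zrange. destruct (Rlt_dec 0 tv) as [Hp|Hp].
  - rewrite <- fl_lt_iff, <- fl_gt_iff by exact g1. split.
    + intros [H1 H2]. exists ((y - IZR m2) / tv).
      assert (E: (y - IZR m2) / tv * tv = y - IZR m2) by (field; lra).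
      split; [split|]; nra.
    + intros [s [Hs E]]. nra.
  - assert (g2' : ~ isZ (y - tv)) by exact g2.
    rewrite <- fl_lt_iff, <- fl_gt_iff by exact g2'. split.
    + intros [H1 H2]. assert (tv < 0) by lra. exists ((y - IZR m2) / tv).
      assert (E: (y - IZR m2) / tv * tv = y - IZR m2) by (field; lra).
      split; [split|]; nra.
    + intros [s [Hs E]]. destruct (Req_dec tv 0) as [Z0|Z0].
      * exfalso. apply g1. exists m2. rewrite E, Z0. ring.
      * assert (tv < 0) by lra. nra.
Qed.

Lemma good_tv_nz tv y : good tv y -> forall m2, In m2 (Ml tv y) -> tv <> 0.
Proof.
  intros G m2 Hm Z0. apply (In_Ml tv y m2 G) in Hm. destruct Hm as [s [_ E]].
  destruct G as [g1 _]. apply g1. exists m2. rewrite E, Z0. ring.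
Qed.

Lemma qf_s th tv y m2 s : tv <> 0 -> y = s * tv + IZR m2 -> qf th tv y m2 = s * th.
Proof. intros Hz E. unfold qf. rewrite E. field. exact Hz. Qed.

Lemma on_slit_good th tv x y : good tv y ->
  (on_slit th tv x y <-> exists m2, In m2 (Ml tv y) /\ isZ (x - qf th tv y m2)).
Proof.
  intros G. split.
  - intros [s [m1 [m2 [Hs [Ex Ey]]]]]. destruct G as [g1 g2].
    assert (s <> 0). { intros ->. apply g1. exists m2. rewrite Ey. ring. }
    assert (s <> 1). { intros ->. apply g2. exists m2. rewrite Ey. ring. }
    assert (tv <> 0). { intros Z0. apply g1. exists m2. rewrite Ey, Z0. ring. }
    exists m2. split.
    + apply In_Ml; [split; auto|]. exists s. split; [lra|auto].
    + rewrite (qf_s th tv y m2 s) by auto. exists m1. lra.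
  - intros [m2 [Hm [m1 Hm1]]].
    pose proof (good_tv_nz tv y G m2 Hm) as Hz.
    apply (In_Ml tv y m2 G) in Hm. destruct Hm as [s [Hs E]].
    rewrite (qf_s th tv y m2 s Hz E) in Hm1.
    exists s, m1, m2. split; [lra|]. split; lra.
Qed.

Lemma on_slit_shift th tv x y a b :
  on_slit th tv x y <-> on_slit th tv (x + IZR a) (y + IZR b).
Proof.
  split.
  - intros [s [m1 [m2 [Hs [Ex Ey]]]]]. exists s, (m1 + a)%Z, (m2 + b)%Z.
    rewrite !plus_IZR. split; [auto|split; lra].
  - intros [s [m1 [m2 [Hs [Ex Ey]]]]]. exists s, (m1 - a)%Z, (m2 - b)%Z.
    rewrite !minus_IZR. split; [auto|split; lra].
Qed.

Lemma good_shift tv y b : good tv y <-> good tv (y + IZR b).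
Proof.
  unfold good. replace (y + IZR b - tv) with ((y - tv) + IZR b) by ring.
  rewrite !isZ_plus. tauto.
Qed.

Lemma sgnZ_pos tv : 0 < tv -> sgnZ tv = 1%Z.
Proof. intros H. unfold sgnZ. destruct Rlt_dec; [auto|lra]. Qed.
Lemma sgnZ_npos tv : ~ 0 < tv -> sgnZ tv = (-1)%Z.
Proof. intros H. unfold sgnZ. destruct Rlt_dec; [lra|auto]. Qed.

Lemma kval_len tv y : (sgnZ tv * Z.of_nat (length (Ml tv y)))%Z = kval tv y.
Proof.
  unfold Ml, Mlo, Mhi, kval. rewrite length_zrange. destruct (Rlt_dec 0 tv) as [H|H].
  - rewrite sgnZ_pos by auto. assert (fl (y - tv) <= fl y)%Z by (apply fl_mono; lra). lia.
  - rewrite sgnZ_npos by auto. assert (fl y <= fl (y - tv))%Z by (apply fl_mono; lra). lia.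
Qed.

Lemma Cf_shiftx th tv x y m :
  Cf th tv (x + IZR m) y = (Cf th tv x y + m * Z.of_nat (length (Ml tv y)))%Z.
Proof.
  unfold Cf. rewrite <- sumZ_plus_const. apply sumZ_ext. intros a _.
  replace (x + IZR m - qf th tv y a) with ((x - qf th tv y a) + IZR m) by ring.
  apply fl_shift.
Qed.

Lemma turns_sheet th tv x y m :
  (sgnZ tv * (Cf th tv (x + IZR m) y - Cf th tv x y))%Z = (m * kval tv y)%Z.
Proof. rewrite Cf_shiftx, <- kval_len. lia. Qed.

Lemma kval_shift tv y b : kval tv (y + IZR b) = kval tv y.
Proof.
  unfold kval. replace (y + IZR b - tv) with ((y - tv) + IZR b) by ring.
  rewrite !fl_shift. lia.
Qed.

Lemma Ml_shift tv y b : Ml tv (y + IZR b) = map (fun z => (z + b)%Z) (Ml tv y).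
Proof.
  unfold Ml, Mlo, Mhi. replace (y + IZR b - tv) with ((y - tv) + IZR b) by ring.
  rewrite !fl_shift. destruct Rlt_dec; apply zrange_shift.
Qed.

Lemma Cf_shift th tv x y a b :
  Cf th tv (x + IZR a) (y + IZR b) = (Cf th tv x y + a * Z.of_nat (length (Ml tv y)))%Z.
Proof.
  unfold Cf. rewrite Ml_shift, sumZ_map, <- sumZ_plus_const. apply sumZ_ext. intros m _.
  unfold qf. rewrite plus_IZR.
  replace (x + IZR a - th * ((y + IZR b - (IZR m + IZR b)) / tv))
    with ((x - th * ((y - IZR m) / tv)) + IZR a) by (unfold Rdiv; ring).
  apply fl_shift.
Qed.

Definition crossL th tv x y t : list (Z * Z * R) :=
  flat_map (fun m2 => map (fun m1 => (m1, m2, qf th tv y m2 + IZR m1 - x))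
     (zrange (fl (x - qf th tv y m2)) (fl (x + t - qf th tv y m2)))) (Ml tv y).

Lemma In_crossL th tv x y t c : good tv y -> ~ on_slit th tv x y -> ~ on_slit th tv (x + t) y ->
  (In c (crossL th tv x y t) <-> hcross th tv x y t c).
Proof.
  intros G N1 N2. destruct c as [[m1 m2] tau]. unfold crossL. rewrite in_flat_map. simpl.
  split.
  - intros [m [Hm Hin]]. apply in_map_iff in Hin. destruct Hin as [k [Ek Hk]].
    injection Ek as E1 E2 E3. subst k m.
    pose proof (good_tv_nz tv y G m2 Hm) as Hz.
    assert (nz : ~ isZ (x + t - qf th tv y m2)).
    { intros HZ. apply N2. apply on_slit_good; auto. exists m2; auto. }
    apply In_zrange in Hk. destruct Hk as [K1 K2].
    apply fl_lt_iff in K1. apply (fl_gt_iff _ _ nz) in K2.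
    apply (In_Ml tv y m2 G) in Hm. destruct Hm as [s [Hs E]].
    pose proof (qf_s th tv y m2 s Hz E) as Q.
    rewrite <- E3. split; [lra|]. exists s. split; [auto|]. split; lra.
  - intros [Ht [s [Hs [Ex Ey]]]].
    assert (Hm : In m2 (Ml tv y)) by (apply In_Ml; auto; exists s; auto).
    pose proof (good_tv_nz tv y G m2 Hm) as Hz.
    pose proof (qf_s th tv y m2 s Hz Ey) as Q.
    exists m2. split; auto. apply in_map_iff. exists m1. split.
    + f_equal. lra.
    + apply In_zrange. split.
      * apply fl_lt_iff. lra.
      * apply fl_gt_iff; [|lra]. intros HZ. apply N2. apply on_slit_good; auto. exists m2; auto.
Qed.

Lemma NoDup_crossL th tv x y t : NoDup (crossL th tv x y t).
Proof.
  unfold crossL. apply NoDup_flat_map_disj.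
  - apply NoDup_zrange.
  - intros a _. apply NoDup_map_inj. apply NoDup_zrange. intros u v _ _ E. injection E; auto.
  - intros a b c _ _ H1 H2. apply in_map_iff in H1, H2.
    destruct H1 as [u [<- _]]. destruct H2 as [v [E _]]. injection E; auto.
Qed.

Lemma length_crossL th tv x y t : 0 <= t ->
  Z.of_nat (length (crossL th tv x y t)) = (Cf th tv (x + t) y - Cf th tv x y)%Z.
Proof.
  intros Ht. unfold crossL, Cf. rewrite length_flat_mapZ, <- sumZ_minus. apply sumZ_ext.
  intros m _. rewrite length_map, length_zrange.
  assert (fl (x - qf th tv y m) <= fl (x + t - qf th tv y m))%Z by (apply fl_mono; lra). lia.
Qed.

Lemma hpath_ok_good th tv x y t : good tv y -> hpath_ok th tv x y t.
Proof.
  intros [g1 g2]. split.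
  - intros tau _ [[_ H]|[_ H]]; auto.
  - intros Z0 tau _ [s [m1 [m2 [_ [_ Ey]]]]]. apply g1. exists m2. rewrite Ey, Z0. ring.
Qed.

Lemma hmove_inv th tv P t Q : good tv (py P) -> hmove th tv P t Q ->
  Q = Pt (sheet P + sgnZ tv * (Cf th tv (px P + t) (py P) - Cf th tv (px P) (py P)))%Z
         (px P + t) (py P).
Proof.
  intros G [Ht [N1 [N2 [_ [l [Hl [Hiff EQ]]]]]]]. rewrite EQ. f_equal. f_equal. f_equal.
  rewrite <- length_crossL by auto.
  assert (length l = length (crossL th tv (px P) (py P) t)); [|lia].
  apply Nat.le_antisymm; apply NoDup_incl_length; auto using NoDup_crossL.
  - intros c Hc. apply In_crossL; auto. apply Hiff; auto.
  - intros c Hc. apply Hiff. apply In_crossL in Hc; auto.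
Qed.

Lemma hmove_intro th tv j x y t : good tv y -> 0 <= t ->
  ~ on_slit th tv x y -> ~ on_slit th tv (x + t) y ->
  hmove th tv (Pt j x y) t
    (Pt (j + sgnZ tv * (Cf th tv (x + t) y - Cf th tv x y))%Z (x + t) y).
Proof.
  intros G Ht N1 N2. split; [auto|]. simpl. split; [auto|]. split; [auto|].
  split; [apply hpath_ok_good; auto|].
  exists (crossL th tv x y t). split; [apply NoDup_crossL|]. split.
  - intros c. apply In_crossL; auto.
  - rewrite <- length_crossL by auto. reflexivity.
Qed.

Lemma hmove_turns th tv j x y m : good tv y -> (0 <= m)%Z -> ~ on_slit th tv x y ->
  hmove th tv (Pt j x y) (IZR m) (Pt (j + m * kval tv y)%Z (x + IZR m) y).
Proof.
  intros G Hm N. rewrite <- (turns_sheet th tv x y m). apply hmove_intro; auto.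
  - apply IZR_le in Hm. auto.
  - intros H. apply N. apply (on_slit_shift th tv x y m 0). rewrite Rplus_0_r. auto.
Qed.

Lemma reg_good d th tv P : reg_closed d th tv P -> good tv (py P) /\ ~ on_slit th tv (px P) (py P).
Proof.
  intros [N [T [Q [HT [Hm Hs]]]]]. split; auto.
  destruct Hm as [_ [_ [_ [[Hp _] [l [_ [_ EQ]]]]]]].
  destruct Hs as [_ [[z Hz] _]]. rewrite EQ in Hz. simpl in Hz.
  assert (Tz : T = IZR z) by lra.
  assert (1 <= T). { rewrite Tz in *. apply IZR_le. apply lt_IZR in HT. lia. }
  split.
  - intros Hy. destruct (fl_spec (px P)) as [F1 F2].
    apply (Hp (IZR (fl (px P) + 1) - px P)).
    + rewrite plus_IZR. simpl. lra.
    + left. split; auto. replace (px P + (IZR (fl (px P) + 1) - px P)) with (IZR (fl (px P) + 1)) by ring.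
      apply isZ_IZR.
  - intros Hy. destruct (fl_spec (px P - th)) as [F1 F2].
    apply (Hp (IZR (fl (px P - th) + 1) - (px P - th))).
    + rewrite plus_IZR. simpl. lra.
    + right. split; auto.
      replace (px P + (IZR (fl (px P - th) + 1) - (px P - th)) - th) with (IZR (fl (px P - th) + 1)) by ring.
      apply isZ_IZR.
Qed.

Lemma good_reg d th tv j x y : (0 < d)%nat -> good tv y -> ~ on_slit th tv x y ->
  reg_closed d th tv (Pt j x y).
Proof.
  intros Hd G N. split; [auto|].
  exists (IZR (Z.of_nat d)). eexists. split.
  - apply IZR_lt. lia.
  - split.
    + apply hmove_turns; auto. lia.
    + unfold same_pt. simpl. split; [|split].
      * replace (j + Z.of_nat d * kval tv y - j)%Z with (kval tv y * Z.of_nat d)%Z by lia.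
        apply Z_mod_mult.
      * replace (x + IZR (Z.of_nat d) - x) with (IZR (Z.of_nat d)) by ring. apply isZ_IZR.
      * replace (y - y) with (IZR 0) by (simpl; ring). apply isZ_IZR.
Qed.

Definition Finv (d : nat) th tv (P : pt) : Z * Z :=
  (kval tv (py P),
   Z.modulo (sheet P - sgnZ tv * Cf th tv (px P) (py P))%Z (Z.gcd (kval tv (py P)) (Z.of_nat d))).

Lemma gcd_nz k d : (0 < d)%nat -> Z.gcd k (Z.of_nat d) <> 0%Z.
Proof. intros Hd E. apply Z.gcd_eq_0 in E. lia. Qed.

Lemma F_same_pt d th tv P Q : (0 < d)%nat -> same_pt d P Q -> Finv d th tv P = Finv d th tv Q.
Proof.
  intros Hd [Hs [[a Ha] [b Hb]]].
  destruct P as [jP xP yP], Q as [jQ xQ yQ]. simpl in *.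
  replace xP with (xQ + IZR a) by lra. replace yP with (yQ + IZR b) by lra.
  unfold Finv; simpl. rewrite kval_shift, Cf_shift. f_equal.
  set (g := Z.gcd (kval tv yQ) (Z.of_nat d)).
  assert (gz : g <> 0%Z) by (apply gcd_nz; auto).
  apply Z.mod_divide in Hs; [|lia]. destruct Hs as [w Hw].
  destruct (Z.gcd_divide_l (kval tv yQ) (Z.of_nat d)) as [k' Hk].
  destruct (Z.gcd_divide_r (kval tv yQ) (Z.of_nat d)) as [d' Hd'].
  fold g in Hk, Hd'.
  pose proof (kval_len tv yQ) as KL.
  replace (jP - sgnZ tv * (Cf th tv xQ yQ + a * Z.of_nat (length (Ml tv yQ))))%Z
    with ((jQ - sgnZ tv * Cf th tv xQ yQ) + (w * d' - a * k') * g)%Z.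
  - apply Z.mod_add. auto.
  - assert (jP = jQ + w * Z.of_nat d)%Z by lia.
    assert (E2 : (sgnZ tv * (a * Z.of_nat (length (Ml tv yQ))) = a * kval tv yQ)%Z) by (rewrite <- KL; ring).
    rewrite Z.mul_add_distr_l, E2, Hk. rewrite H, Hd'. ring.
Qed.

Lemma fl_const_ord c y y' : y <= y' ->
  (forall y'', y <= y'' <= y' -> ~ isZ (y'' - c)) -> fl (y - c) = fl (y' - c).
Proof.
  intros Hle H. assert (M: (fl (y - c) <= fl (y' - c))%Z) by (apply fl_mono; lra).
  destruct (Z.eq_dec (fl (y - c)) (fl (y' - c))) as [E|E]; auto. exfalso.
  destruct (fl_spec (y - c)) as [A1 A2], (fl_spec (y' - c)) as [B1 B2].
  assert (HH: IZR (fl (y - c) + 1) <= IZR (fl (y' - c))) by (apply IZR_le; lia). rewrite plus_IZR in HH. simpl in HH.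
  apply (H (IZR (fl (y' - c)) + c)).
  - lra.
  - replace (IZR (fl (y' - c)) + c - c) with (IZR (fl (y' - c))) by ring. apply isZ_IZR.
Qed.

Lemma fl_const c y y' :
  (forall y'', Rmin y y' <= y'' <= Rmax y y' -> ~ isZ (y'' - c)) -> fl (y - c) = fl (y' - c).
Proof.
  intros H. unfold Rmin, Rmax in H. destruct (Rle_dec y y').
  - apply fl_const_ord; auto.
  - symmetry. apply fl_const_ord; [lra|]. auto.
Qed.

Lemma fl_const0 y y' :
  (forall y'', Rmin y y' <= y'' <= Rmax y y' -> ~ isZ y'') -> fl y = fl y'.
Proof.
  intros H. pose proof (fl_const 0 y y') as C. rewrite !Rminus_0_r in C. apply C.
  intros y'' Hy. rewrite Rminus_0_r. auto.
Qed.

Lemma Ml_eq tv y y' : fl y = fl y' -> fl (y - tv) = fl (y' - tv) -> Ml tv y = Ml tv y'.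
Proof. intros E1 E2. unfold Ml, Mlo, Mhi. rewrite E1, E2. reflexivity. Qed.

Lemma affine_floor a b : fl a <> fl b ->
  exists l z, 0 <= l <= 1 /\ a + l * (b - a) = IZR z.
Proof.
  intros Hne. destruct (fl_spec a) as [A1 A2], (fl_spec b) as [B1 B2].
  destruct (Z_lt_le_dec (fl a) (fl b)) as [L|L].
  - assert (IZR (fl a + 1) <= IZR (fl b)) by (apply IZR_le; lia). rewrite plus_IZR in H. simpl in H.
    exists ((IZR (fl b) - a) / (b - a)), (fl b).
    assert (E: (IZR (fl b) - a) / (b - a) * (b - a) = IZR (fl b) - a) by (field; lra).
    split; [split|]; nra.
  - assert (fl b < fl a)%Z by lia.
    assert (IZR (fl b + 1) <= IZR (fl a)) by (apply IZR_le; lia). rewrite plus_IZR in H0. simpl in H0.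
    exists ((IZR (fl a) - a) / (b - a)), (fl a).
    assert (E: (IZR (fl a) - a) / (b - a) * (b - a) = IZR (fl a) - a) by (field; lra).
    split; [split|]; nra.
Qed.

Lemma between_l y y' l : 0 <= l <= 1 ->
  Rmin y y' <= y + l * (y' - y) <= Rmax y y'.
Proof. intros H. unfold Rmin, Rmax. destruct Rle_dec; split; nra. Qed.

Lemma Cf_vconst d th tv j x y y' :
  (forall y'', Rmin y y' <= y'' <= Rmax y y' -> reg_closed d th tv (Pt j x y'')) ->
  fl y = fl y' /\ fl (y - tv) = fl (y' - tv) /\ Cf th tv x y = Cf th tv x y'.
Proof.
  intros H.
  assert (G : forall y'', Rmin y y' <= y'' <= Rmax y y' -> good tv y'' /\ ~ on_slit th tv x y'').
  { intros y'' Hy. apply (reg_good d th tv (Pt j x y'')). auto. }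
  assert (E1 : fl y = fl y') by (apply fl_const0; intros; apply G; auto).
  assert (E2 : fl (y - tv) = fl (y' - tv)) by (apply fl_const; intros; apply G; auto).
  split; auto. split; auto.
  unfold Cf. rewrite <- (Ml_eq tv y y' E1 E2). apply sumZ_ext. intros m Hm.
  destruct (Z.eq_dec (fl (x - qf th tv y m)) (fl (x - qf th tv y' m))) as [E|E]; auto.
  exfalso. apply affine_floor in E. destruct E as [l [z [Hl Ez]]].
  set (y'' := y + l * (y' - y)).
  assert (Hb : Rmin y y' <= y'' <= Rmax y y') by (apply between_l; auto).
  destruct (G y'' Hb) as [Gy Ny]. apply Ny. apply on_slit_good; auto.
  exists m. split.
  - assert (fl y'' = fl y).
    { apply fl_const0. intros u Hu. apply G. clear -Hb Hu. unfold Rmin, Rmax in *. repeat destruct Rle_dec; split; lra. }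
    assert (fl (y'' - tv) = fl (y - tv)).
    { apply fl_const. intros u Hu. apply G. clear -Hb Hu. unfold Rmin, Rmax in *. repeat destruct Rle_dec; split; lra. }
    rewrite (Ml_eq tv y'' y); auto.
  - exists z. rewrite <- Ez. unfold y'', qf, Rdiv. ring.
Qed.

Lemma F_step d th tv P Q : (0 < d)%nat -> cyl_step d th tv P Q -> Finv d th tv P = Finv d th tv Q.
Proof.
  intros Hd [RP [RQ [Hs | [[t Hm] | Hv]]]].
  - apply F_same_pt; auto.
  - destruct (reg_good _ _ _ _ RP) as [G _].
    rewrite (hmove_inv th tv P t Q G Hm). unfold Finv. simpl. f_equal. f_equal. ring.
  - destruct Hv as [Es [Ex H]].
    destruct (Cf_vconst d th tv (sheet P) (px P) (py P) (py Q) H) as [E1 [E2 E3]].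
    unfold Finv. rewrite Es, Ex, E3. unfold kval. rewrite E1, E2. reflexivity.
Qed.

Lemma F_cyl d th tv P Q : (0 < d)%nat -> same_cyl d th tv P Q -> Finv d th tv P = Finv d th tv Q.
Proof.
  intros Hd H. induction H.
  - apply F_step; auto.
  - reflexivity.
  - auto.
  - congruence.
Qed.

Lemma exists_free (L : list Z) (pos : Z -> R) :
  exists x, 0 <= x /\ forall m, In m L -> forall z : Z,
    / (2 * (INR (length L) + 1)) <= Rabs (x - pos m - IZR z).
Proof.
  set (K := length L). set (r := / (2 * (INR K + 1))).
  assert (HK : 0 <= INR K) by apply pos_INR.
  assert (Hr : 2 * (INR K + 1) * r = 1) by (unfold r; field; lra).
  apply NNPP. intros H.
  assert (B : forall j, exists m, (j <= K)%nat -> In m L /\ exists z,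
     Rabs (INR j / (INR K + 1) - pos m - IZR z) < r).
  { intros j. destruct (le_lt_dec j K) as [Hj|Hj].
    - apply NNPP. intros nB. apply H. exists (INR j / (INR K + 1)). split.
      + apply Rmult_le_pos; [apply pos_INR|]. left; apply Rinv_0_lt_compat; lra.
      + intros m Hm z. apply Rnot_lt_le. intros Hlt. apply nB. exists m. intros _. split; auto. exists z; auto.
    - exists 0%Z. intros; lia. }
  set (f := fun j => proj1_sig (constructive_indefinite_description _ (B j))).
  assert (Hf : forall j, (j <= K)%nat -> In (f j) L /\ exists z,
     Rabs (INR j / (INR K + 1) - pos (f j) - IZR z) < r).
  { intros j Hj. unfold f. destruct (constructive_indefinite_description _ (B j)) as [m Hm]. simpl. auto. }
  assert (ND : NoDup (map f (seq 0 (S K)))).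
  { apply NoDup_map_inj; [apply seq_NoDup|]. intros a b Ha Hb Eab.
    apply in_seq in Ha, Hb.
    destruct (Hf a ltac:(lia)) as [_ [za Ha']]. destruct (Hf b ltac:(lia)) as [_ [zb Hb']].
    rewrite Eab in Ha'. apply Rabs_def2 in Ha', Hb'.
    set (w := (Z.of_nat a - Z.of_nat b - (Z.of_nat K + 1) * (za - zb))%Z).
    assert (Ew : IZR w = (INR K + 1) * ((INR a / (INR K + 1) - pos (f b) - IZR za) - (INR b / (INR K + 1) - pos (f b) - IZR zb))).
    { unfold w. rewrite minus_IZR, minus_IZR, mult_IZR, plus_IZR, minus_IZR, <- !INR_IZR_INZ. simpl. field. lra. }
    assert (-1 < IZR w < 1) by (rewrite Ew; nra).
    assert (w = 0%Z). { destruct H0 as [W1 W2]. apply lt_IZR in W1, W2. lia. }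
    unfold w in H1. apply Nat2Z.inj.
    destruct (Z.eq_dec (za - zb) 0) as [Ez|Ez]; [rewrite Ez in H1; lia|].
    assert (Z.abs ((Z.of_nat K + 1) * (za - zb)) >= Z.of_nat K + 1)%Z.
    { rewrite Z.abs_mul. rewrite (Z.abs_eq (Z.of_nat K + 1)) by lia.
      assert (1 <= Z.abs (za - zb))%Z by lia. nia. }
    lia. }
  apply NoDup_incl_length with (l' := L) in ND.
  - rewrite length_map, length_seq in ND. unfold K in ND. lia.
  - intros m Hm. apply in_map_iff in Hm. destruct Hm as [j [<- Hj]]. apply in_seq in Hj.
    apply Hf. lia.
Qed.

Lemma free_offslit th tv x y : good tv y ->
  (forall m, In m (Ml tv y) -> forall z : Z, / (2 * (INR (length (Ml tv y)) + 1)) <= Rabs (x - qf th tv y m - IZR z)) ->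
  ~ on_slit th tv x y.
Proof.
  intros G Hf Hs. apply on_slit_good in Hs; auto. destruct Hs as [m [Hm [z Hz]]].
  specialize (Hf m Hm z). rewrite Hz in Hf. replace (IZR z - IZR z) with 0 in Hf by ring.
  rewrite Rabs_R0 in Hf. assert (0 < / (2 * (INR (length (Ml tv y)) + 1))).
  { apply Rinv_0_lt_compat. pose proof (pos_INR (length (Ml tv y))). lra. }
  lra.
Qed.

Lemma exists_offslit th tv y : good tv y -> exists x, ~ on_slit th tv x y.
Proof.
  intros G. destruct (exists_free (Ml tv y) (qf th tv y)) as [x [_ Hx]].
  exists x. apply free_offslit; auto.
Qed.

Lemma comp_between tv y1 y2 y : good tv y1 -> good tv y2 -> fl y1 = fl y2 ->
  fl (y1 - tv) = fl (y2 - tv) -> Rmin y1 y2 <= y <= Rmax y1 y2 ->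
  good tv y /\ fl y = fl y1 /\ fl (y - tv) = fl (y1 - tv).
Proof.
  intros [a1 b1] [a2 b2] E1 E2 Hy. unfold Rmin, Rmax in Hy.
  destruct (Rle_dec y1 y2) as [L|L].
  - assert (F1 : fl y = fl y1).
    { pose proof (fl_mono y1 y ltac:(lra)). pose proof (fl_mono y y2 ltac:(lra)). lia. }
    assert (F2 : fl (y - tv) = fl (y1 - tv)).
    { pose proof (fl_mono (y1 - tv) (y - tv) ltac:(lra)). pose proof (fl_mono (y - tv) (y2 - tv) ltac:(lra)). lia. }
    split; [|auto]. split.
    + intros Hz. apply isZ_fl in Hz. destruct (fl_spec y1). rewrite F1 in Hz.
      assert (y1 = y) by lra. subst. apply a1. apply isZ_fl. lra.
    + intros Hz. apply isZ_fl in Hz. destruct (fl_spec (y1 - tv)). rewrite F2 in Hz.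
      assert (y1 = y) by lra. subst. apply b1. apply isZ_fl. lra.
  - assert (F1 : fl y = fl y1).
    { pose proof (fl_mono y2 y ltac:(lra)). pose proof (fl_mono y y1 ltac:(lra)). lia. }
    assert (F2 : fl (y - tv) = fl (y1 - tv)).
    { pose proof (fl_mono (y2 - tv) (y - tv) ltac:(lra)). pose proof (fl_mono (y - tv) (y1 - tv) ltac:(lra)). lia. }
    split; [|auto]. split.
    + intros Hz. apply isZ_fl in Hz. destruct (fl_spec y2). rewrite F1, E1 in Hz.
      assert (y2 = y) by lra. subst. apply a2. apply isZ_fl. lra.
    + intros Hz. apply isZ_fl in Hz. destruct (fl_spec (y2 - tv)). rewrite F2, E2 in Hz.
      assert (y2 = y) by lra. subst. apply b2. apply isZ_fl. lra.
Qed.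

Lemma abs_between y1 y2 y : Rmin y1 y2 <= y <= Rmax y1 y2 -> Rabs (y - y1) <= Rabs (y2 - y1).
Proof. intros H. unfold Rmin, Rmax in H. unfold Rabs. repeat destruct Rcase_abs; destruct Rle_dec; lra. Qed.

Lemma vstep d th tv j x y1 y2 : (0 < d)%nat -> good tv y1 -> good tv y2 -> fl y1 = fl y2 ->
  fl (y1 - tv) = fl (y2 - tv) -> ~ on_slit th tv x y1 ->
  Rabs (th * ((y2 - y1) / tv)) < / (2 * (INR (length (Ml tv y1)) + 1)) ->
  exists Q, py Q = y2 /\ reg_closed d th tv Q /\ same_cyl d th tv (Pt j x y1) Q.
Proof.
  intros Hd G1 G2 E1 E2 N Habs.
  destruct (exists_free (Ml tv y1) (qf th tv y1)) as [xf [Hxf Hfree]].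
  set (x' := xf + IZR (fl x + 1)).
  assert (Hsh : forall m z, In m (Ml tv y1) -> forall y, x' - qf th tv y m = IZR z ->
     Rabs (th * ((y - y1) / tv)) >= / (2 * (INR (length (Ml tv y1)) + 1))).
  { intros m z Hm y Ez. specialize (Hfree m Hm (z - (fl x + 1))%Z).
    replace (xf - qf th tv y1 m - IZR (z - (fl x + 1))) with (th * ((y - y1) / tv)) in Hfree.
    - lra.
    - rewrite minus_IZR, <- Ez. unfold x', qf, Rdiv. ring. }
  assert (Nb : forall y, Rmin y1 y2 <= y <= Rmax y1 y2 -> good tv y /\ ~ on_slit th tv x' y).
  { intros y Hy. destruct (comp_between tv y1 y2 y G1 G2 E1 E2 Hy) as [Gy [F1 F2]].
    split; auto. intros Hs. apply on_slit_good in Hs; auto. destruct Hs as [m [Hm [z Hz]]].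
    rewrite (Ml_eq tv y y1 F1 F2) in Hm.
    specialize (Hsh m z Hm y Hz).
    assert (Rabs (th * ((y - y1) / tv)) <= Rabs (th * ((y2 - y1) / tv))).
    { replace (th * ((y - y1) / tv)) with ((th * / tv) * (y - y1)) by (unfold Rdiv; ring).
      replace (th * ((y2 - y1) / tv)) with ((th * / tv) * (y2 - y1)) by (unfold Rdiv; ring).
      rewrite (Rabs_mult (th * / tv) (y - y1)), (Rabs_mult (th * / tv) (y2 - y1)). apply Rmult_le_compat_l; [apply Rabs_pos|]. apply abs_between; auto. }
    lra. }
  assert (Hy1 : Rmin y1 y2 <= y1 <= Rmax y1 y2) by (unfold Rmin, Rmax; destruct Rle_dec; lra).
  assert (Hy2 : Rmin y1 y2 <= y2 <= Rmax y1 y2) by (unfold Rmin, Rmax; destruct Rle_dec; lra).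
  destruct (fl_spec x) as [F1 F2].
  assert (Ht : 0 <= x' - x) by (unfold x'; rewrite plus_IZR; simpl; lra).
  pose proof (hmove_intro th tv j x y1 (x' - x) G1 Ht N) as HM.
  replace (x + (x' - x)) with x' in HM by ring.
  specialize (HM (proj2 (Nb y1 Hy1))).
  set (j' := (j + sgnZ tv * (Cf th tv x' y1 - Cf th tv x y1))%Z) in HM.
  exists (Pt j' x' y2). split; [reflexivity|].
  assert (R2 : reg_closed d th tv (Pt j' x' y2)) by (apply good_reg; auto; apply Nb; auto).
  split; auto.
  assert (R1 : reg_closed d th tv (Pt j' x' y1)) by (apply good_reg; auto; apply Nb; auto).
  assert (R0 : reg_closed d th tv (Pt j x y1)) by (apply good_reg; auto).
  apply rst_trans with (Pt j' x' y1).
  - apply rst_step. split; auto. split; auto. right. left. exists (x' - x). auto.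
  - apply rst_step. split; auto. split; auto. right. right.
    split; [reflexivity|]. split; [reflexivity|]. simpl. intros y Hy.
    apply good_reg; auto; apply Nb; auto.
Qed.

Lemma chain d th tv (N : nat) : forall j x y1 y2, (0 < d)%nat -> good tv y1 -> good tv y2 ->
  fl y1 = fl y2 -> fl (y1 - tv) = fl (y2 - tv) -> ~ on_slit th tv x y1 ->
  Rabs (th * ((y2 - y1) / tv)) <= INR (S N) * (/ (2 * (INR (length (Ml tv y1)) + 1)) / 2) ->
  exists Q, py Q = y2 /\ reg_closed d th tv Q /\ same_cyl d th tv (Pt j x y1) Q.
Proof.
  set (rr := fun y1 => / (2 * (INR (length (Ml tv y1)) + 1))).
  assert (Hrr : forall y, 0 < rr y).
  { intros y. unfold rr. apply Rinv_0_lt_compat. pose proof (pos_INR (length (Ml tv y))). lra. }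
  induction N as [|N IH]; intros j x y1 y2 Hd G1 G2 E1 E2 N0 Habs.
  - apply vstep; auto. fold (rr y1) in *. specialize (Hrr y1). simpl in Habs. lra.
  - set (M := INR (S (S N))).
    assert (HM : 0 < M) by (unfold M; apply lt_0_INR; lia).
    assert (HM1 : INR (S N) = M - 1) by (unfold M; rewrite (S_INR (S N)); ring).
    assert (HM2 : 1 <= M) by (pose proof (pos_INR (S N)); lra).
    set (y' := y1 + / M * (y2 - y1)).
    assert (Hl : 0 <= / M <= 1).
    { split; [left; apply Rinv_0_lt_compat; auto|]. unfold M. rewrite S_INR.
      pose proof (pos_INR (S N)). rewrite <- Rinv_1. apply Rinv_le_contravar; lra. }
    assert (Hb : Rmin y1 y2 <= y' <= Rmax y1 y2) by (apply between_l; auto).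
    destruct (comp_between tv y1 y2 y' G1 G2 E1 E2 Hb) as [G' [F1 F2]].
    fold (rr y1) in Habs. fold M in Habs.
    set (D := th * ((y2 - y1) / tv)) in Habs.
    assert (D1 : th * ((y' - y1) / tv) = D * / M) by (unfold D, y', Rdiv; ring).
    assert (iM : M * / M = 1) by (apply Rinv_r; lra).
    assert (D2 : th * ((y2 - y') / tv) = (D * / M) * (M - 1)).
    { replace ((D * / M) * (M - 1)) with (D * (M * / M) - D * / M) by ring. rewrite iM.
      unfold D, y', Rdiv. ring. }
    assert (iMp : 0 < / M) by (apply Rinv_0_lt_compat; auto).
    destruct (vstep d th tv j x y1 y' Hd G1 G' (eq_sym F1) (eq_sym F2) N0) as [Q1 [PQ1 [RQ1 C1]]].
    { rewrite D1. fold (rr y1). rewrite Rabs_mult, (Rabs_pos_eq (/ M)) by lra.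
      specialize (Hrr y1). nra. }
    destruct Q1 as [j1 x1 y1']. simpl in PQ1. subst y1'.
    destruct (reg_good _ _ _ _ RQ1) as [_ NQ1]. simpl in NQ1.
    destruct (IH j1 x1 y' y2 Hd G' G2 ltac:(congruence) ltac:(congruence) NQ1) as [Q [PQ [RQ C2]]].
    { rewrite D2. rewrite (Ml_eq tv y' y1 F1 F2). fold (rr y1). rewrite HM1.
      rewrite Rabs_mult, Rabs_mult, (Rabs_pos_eq (/ M)), (Rabs_pos_eq (M - 1)) by lra.
      specialize (Hrr y1).
      assert (A1 : Rabs D * / M <= rr y1 / 2).
      { apply Rmult_le_compat_r with (r := / M) in Habs; [|lra].
        replace (M * (rr y1 / 2) * / M) with ((M * / M) * (rr y1 / 2)) in Habs by ring.
        rewrite iM in Habs. lra. }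
      apply Rmult_le_compat_r with (r := M - 1) in A1; [|lra]. lra. }
    exists Q. split; auto. split; auto. apply rst_trans with (Pt j1 x1 y'); auto.
Qed.

Lemma exists_N (a rho : R) : 0 < rho -> exists N : nat, a <= INR (S N) * rho.
Proof.
  intros Hr. destruct (archimed (a / rho)) as [H1 _].
  exists (Z.to_nat (up (a / rho))). rewrite S_INR.
  destruct (Z_le_gt_dec 0 (up (a / rho))) as [L|L].
  - rewrite INR_IZR_INZ, Z2Nat.id by auto.
    assert (a = a / rho * rho) by (field; lra). nra.
  - replace (Z.to_nat (up (a / rho))) with 0%nat by lia. simpl.
    assert (IZR (up (a / rho)) < 0) by (apply IZR_lt; lia).
    assert (a = a / rho * rho) by (field; lra). nra.
Qed.

Lemma connect d th tv j x y1 y2 : (0 < d)%nat -> good tv y1 -> good tv y2 ->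
  fl y1 = fl y2 -> fl (y1 - tv) = fl (y2 - tv) -> ~ on_slit th tv x y1 ->
  exists Q, py Q = y2 /\ reg_closed d th tv Q /\ same_cyl d th tv (Pt j x y1) Q.
Proof.
  intros. destruct (exists_N (Rabs (th * ((y2 - y1) / tv))) (/ (2 * (INR (length (Ml tv y1)) + 1)) / 2)) as [N HN].
  { pose proof (pos_INR (length (Ml tv y1))). apply Rdiv_lt_0_compat; [|lra]. apply Rinv_0_lt_compat. lra. }
  eapply chain; eauto.
Qed.

Lemma adjust d th tv j' x' x0 y0 : (0 < d)%nat -> good tv y0 -> ~ on_slit th tv x0 y0 ->
  ~ on_slit th tv x' y0 ->
  exists r, (0 <= r < Z.gcd (kval tv y0) (Z.of_nat d))%Z /\
    same_cyl d th tv (Pt j' x' y0) (Pt (r + sgnZ tv * Cf th tv x0 y0) x0 y0).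
Proof.
  intros Hd G N0 N'.
  set (k := kval tv y0). set (g := Z.gcd k (Z.of_nat d)). set (c0 := (sgnZ tv * Cf th tv x0 y0)%Z).
  assert (gz : g <> 0%Z) by (apply gcd_nz; auto).
  assert (gp : (0 < g)%Z) by (pose proof (Z.gcd_nonneg k (Z.of_nat d)); unfold g in *; lia).
  set (f := fl (x0 - x')).
  set (t1 := x0 - x' - IZR f).
  destruct (fl_spec (x0 - x')) as [S1 S2].
  assert (Ht1 : 0 <= t1) by (unfold t1, f; lra).
  assert (E1 : x' + t1 = x0 + IZR (- f)) by (unfold t1; rewrite opp_IZR; ring).
  assert (N1 : ~ on_slit th tv (x' + t1) y0).
  { rewrite E1. intros H. apply N0. apply (on_slit_shift th tv x0 y0 (- f) 0). rewrite Rplus_0_r. auto. }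
  pose proof (hmove_intro th tv j' x' y0 t1 G Ht1 N' N1) as HM1.
  set (j2 := (j' + sgnZ tv * (Cf th tv (x' + t1) y0 - Cf th tv x' y0))%Z) in HM1.
  set (u := (j2 - c0)%Z).
  set (r := (u mod g)%Z). set (z := (u / g)%Z).
  assert (Eu : u = (g * z + r)%Z) by (apply Z.div_mod; auto).
  destruct (Zis_gcd_bezout _ _ _ (Zgcd_is_gcd k (Z.of_nat d))) as [ub vb Eb]. fold g in Eb.
  set (m := ((- (z * ub)) mod (Z.of_nat d))%Z).
  set (q := ((- (z * ub)) / (Z.of_nat d))%Z).
  assert (Em : (- (z * ub) = Z.of_nat d * q + m)%Z) by (apply Z.div_mod; lia).
  assert (Hm : (0 <= m)%Z) by (apply Z.mod_pos_bound; lia).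
  pose proof (hmove_turns th tv j2 x0 y0 m G Hm N0) as HM2. fold k in HM2.
  exists r. split; [apply Z.mod_pos_bound; auto|].
  assert (R0 : reg_closed d th tv (Pt j' x' y0)) by (apply good_reg; auto).
  assert (R1 : reg_closed d th tv (Pt j2 (x' + t1) y0)) by (apply good_reg; auto).
  assert (R2 : reg_closed d th tv (Pt j2 x0 y0)) by (apply good_reg; auto).
  assert (N3 : ~ on_slit th tv (x0 + IZR m) y0).
  { intros H. apply N0. apply (on_slit_shift th tv x0 y0 m 0). rewrite Rplus_0_r. auto. }
  assert (R3 : reg_closed d th tv (Pt (j2 + m * k) (x0 + IZR m) y0)) by (apply good_reg; auto).
  assert (R4 : reg_closed d th tv (Pt (r + c0) x0 y0)) by (apply good_reg; auto).
  apply rst_trans with (Pt j2 (x' + t1) y0).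
  { apply rst_step. split; auto. split; auto. right; left. exists t1; auto. }
  apply rst_trans with (Pt j2 x0 y0).
  { apply rst_step. split; auto. split; auto. left. unfold same_pt; simpl. split; [|split].
    - rewrite Z.sub_diag. reflexivity.
    - rewrite E1. replace (x0 + IZR (- f) - x0) with (IZR (- f)) by ring. apply isZ_IZR.
    - replace (y0 - y0) with (IZR 0) by (simpl; ring). apply isZ_IZR. }
  apply rst_trans with (Pt (j2 + m * k) (x0 + IZR m) y0).
  { apply rst_step. split; auto. split; auto. right; left. exists (IZR m); auto. }
  apply rst_step. split; auto. split; auto. left. unfold same_pt; simpl. split; [|split].
  - replace (j2 + m * k - (r + c0))%Z with ((z * vb - q * k) * Z.of_nat d)%Z.
    + apply Z_mod_mult.
    + assert (j2 = u + c0)%Z by (unfold u; ring). rewrite H.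
      assert (m = - (z * ub) - Z.of_nat d * q)%Z by lia. rewrite H0. rewrite Eu.
      rewrite <- Eb. ring.
  - replace (x0 + IZR m - x0) with (IZR m) by ring. apply isZ_IZR.
  - replace (y0 - y0) with (IZR 0) by (simpl; ring). apply isZ_IZR.
Qed.

Lemma leafw d th tv j x0 y0 : (0 < d)%nat -> good tv y0 -> ~ on_slit th tv x0 y0 ->
  leaf_width d th tv (Pt j x0 y0) (INR d / IZR (Z.gcd (kval tv y0) (Z.of_nat d))).
Proof.
  intros Hd G N.
  set (k := kval tv y0). set (g := Z.gcd k (Z.of_nat d)).
  assert (gz : g <> 0%Z) by (apply gcd_nz; auto).
  assert (gp : (0 < g)%Z) by (pose proof (Z.gcd_nonneg k (Z.of_nat d)); unfold g in *; lia).
  destruct (Z.gcd_divide_r k (Z.of_nat d)) as [d' Hd']. fold g in Hd'.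
  destruct (Z.gcd_divide_l k (Z.of_nat d)) as [k' Hk']. fold g in Hk'.
  assert (dp : (0 < d')%Z) by nia.
  assert (Ew : INR d / IZR g = IZR d').
  { rewrite INR_IZR_INZ, Hd', mult_IZR. field. apply not_0_IZR. auto. }
  rewrite Ew. split; [apply IZR_lt; auto|]. split.
  - exists (Pt (j + d' * k) (x0 + IZR d') y0). split.
    + apply hmove_turns; auto. lia.
    + unfold same_pt; simpl. split; [|split].
      * replace (j + d' * k - j)%Z with (k' * Z.of_nat d)%Z by (rewrite Hk', Hd'; ring).
        apply Z_mod_mult.
      * replace (x0 + IZR d' - x0) with (IZR d') by ring. apply isZ_IZR.
      * replace (y0 - y0) with (IZR 0) by (simpl; ring). apply isZ_IZR.
  - intros t Q Ht HM HS. rewrite (hmove_inv th tv (Pt j x0 y0) t Q G HM) in HS. simpl in HS.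
    destruct HS as [Hs [[z Hz] _]]. simpl in Hz, Hs.
    assert (Tz : t = IZR z) by lra. subst t.
    destruct Ht as [T1 T2]. apply lt_IZR in T1, T2.
    rewrite turns_sheet in Hs. fold k in Hs.
    replace (j + z * k - j)%Z with (z * k)%Z in Hs by ring.
    apply Z.mod_divide in Hs; [|lia].
    rewrite Hd', Hk' in Hs. replace (z * (k' * g))%Z with (z * k' * g)%Z in Hs by ring.
    apply Z.mul_divide_cancel_r in Hs; auto.
    assert (cop : Z.gcd d' k' = 1%Z).
    { pose proof (Z.gcd_div_gcd k (Z.of_nat d) g gz eq_refl) as C.
      rewrite Hd', Hk', !Z.div_mul in C by auto. rewrite Z.gcd_comm. auto. }
    rewrite Z.mul_comm in Hs. apply Z.gauss in Hs; auto.
    apply Z.divide_pos_le in Hs; lia.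
Qed.

Lemma FOP_nodup {A B} (R : A -> A -> Prop) (f : A -> B) l :
  (forall a b, f a <> f b -> R a b) -> NoDup (map f l) -> ForallOrdPairs R l.
Proof.
  intros HR. induction l as [|a l IH]; intros Hn; constructor.
  - simpl in Hn. inversion Hn; subst. apply Forall_forall. intros b Hb. apply HR.
    intros E. apply H1. rewrite E. apply in_map. auto.
  - simpl in Hn. inversion Hn; auto.
Qed.

Definition reps d th tv x0 y0 (w : R) : list (pt * R) :=
  map (fun r => (Pt (r + sgnZ tv * Cf th tv x0 y0) x0 y0, w))
      (zrange (-1) (Z.gcd (kval tv y0) (Z.of_nat d) - 1)).

Lemma reps_len d th tv x0 y0 w : length (reps d th tv x0 y0 w) = Z.to_nat (Z.gcd (kval tv y0) (Z.of_nat d)).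
Proof. unfold reps. rewrite length_map, length_zrange. f_equal. lia. Qed.

Lemma reps_snd d th tv x0 y0 w : Forall (fun c => snd c = w) (reps d th tv x0 y0 w).
Proof. apply Forall_forall. intros c Hc. unfold reps in Hc. apply in_map_iff in Hc. destruct Hc as [r [<- _]]. reflexivity. Qed.

Lemma reps_ok d th tv x0 y0 w : (0 < d)%nat -> good tv y0 -> ~ on_slit th tv x0 y0 ->
  w = INR d / IZR (Z.gcd (kval tv y0) (Z.of_nat d)) ->
  forall c, In c (reps d th tv x0 y0 w) -> reg_closed d th tv (fst c) /\ leaf_width d th tv (fst c) (snd c).
Proof.
  intros Hd G N Ew c Hc. unfold reps in Hc. apply in_map_iff in Hc. destruct Hc as [r [<- _]]. simpl.
  split; [apply good_reg; auto|]. rewrite Ew. apply leafw; auto.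
Qed.

Lemma reps_F d th tv x0 y0 w : (0 < d)%nat ->
  map (fun c => Finv d th tv (fst c)) (reps d th tv x0 y0 w) =
  map (fun r => (kval tv y0, r)) (zrange (-1) (Z.gcd (kval tv y0) (Z.of_nat d) - 1)).
Proof.
  intros Hd. unfold reps. rewrite map_map. apply map_ext_in. intros r Hr. apply In_zrange in Hr.
  unfold Finv. simpl. f_equal. rewrite Z.add_simpl_r. apply Z.mod_small. lia.
Qed.

Lemma reps_cover d th tv x0 y0 w P : (0 < d)%nat -> good tv y0 -> ~ on_slit th tv x0 y0 ->
  fl y0 = 0%Z -> reg_closed d th tv P ->
  fl (py P - IZR (fl (py P)) - tv) = fl (y0 - tv) ->
  exists c, In c (reps d th tv x0 y0 w) /\ same_cyl d th tv P (fst c).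
Proof.
  intros Hd G0 N0 F0 RP Ef.
  destruct (reg_good _ _ _ _ RP) as [GP NP].
  destruct P as [j x y]. simpl in *.
  set (y1 := y - IZR (fl y)) in *.
  assert (Ey1 : y1 = y + IZR (- fl y)) by (unfold y1; rewrite opp_IZR; ring).
  assert (G1 : good tv y1) by (rewrite Ey1; apply good_shift; auto).
  assert (N1 : ~ on_slit th tv x y1).
  { rewrite Ey1. intros H. apply NP. apply (on_slit_shift th tv x y 0 (- fl y)). rewrite Rplus_0_r. auto. }
  assert (F1 : fl y1 = 0%Z) by (rewrite Ey1, fl_shift; lia).
  assert (R1 : reg_closed d th tv (Pt j x y1)) by (apply good_reg; auto).
  destruct (connect d th tv j x y1 y0 Hd G1 G0 ltac:(congruence) Ef N1) as [Q [PQ [RQ CQ]]].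
  destruct Q as [j' x' y0']. simpl in PQ. subst y0'.
  destruct (reg_good _ _ _ _ RQ) as [_ NQ]. simpl in NQ.
  destruct (adjust d th tv j' x' x0 y0 Hd G0 N0 NQ) as [r [Hr CR]].
  exists (Pt (r + sgnZ tv * Cf th tv x0 y0) x0 y0, w). split.
  - unfold reps. apply in_map_iff. exists r. split; auto. apply In_zrange. lia.
  - simpl. apply rst_trans with (Pt j x y1).
    + apply rst_step. split; auto. split; auto. left. unfold same_pt; simpl. split; [|split].
      * rewrite Z.sub_diag. reflexivity.
      * replace (x - x) with (IZR 0) by (simpl; ring). apply isZ_IZR.
      * replace (y - y1) with (IZR (fl y)) by (unfold y1; ring). apply isZ_IZR.
    + apply rst_trans with (Pt j' x' y0); auto.
Qed.

Lemma not_cyl_of_F d th tv P Q : (0 < d)%nat -> Finv d th tv P <> Finv d th tv Q -> ~ same_cyl d th tv P Q.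
Proof. intros Hd H C. apply H. apply F_cyl; auto. Qed.

Lemma hc_two d th tv xA yA xB yB wA wB : (0 < d)%nat ->
  good tv yA -> good tv yB -> ~ on_slit th tv xA yA -> ~ on_slit th tv xB yB ->
  fl yA = 0%Z -> fl yB = 0%Z -> kval tv yA <> kval tv yB ->
  wA = INR d / IZR (Z.gcd (kval tv yA) (Z.of_nat d)) ->
  wB = INR d / IZR (Z.gcd (kval tv yB) (Z.of_nat d)) ->
  (forall P, reg_closed d th tv P ->
     fl (py P - IZR (fl (py P)) - tv) = fl (yA - tv) \/ fl (py P - IZR (fl (py P)) - tv) = fl (yB - tv)) ->
  horizontal_cylinders d th tv (reps d th tv xA yA wA ++ reps d th tv xB yB wB).
Proof.
  intros Hd GA GB NA NB FA FB Kne EA EB Hcov. split; [|split].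
  - intros c Hc. apply in_app_or in Hc. destruct Hc as [Hc|Hc].
    + apply (reps_ok d th tv xA yA wA); auto.
    + apply (reps_ok d th tv xB yB wB); auto.
  - apply FOP_nodup with (f := fun c => Finv d th tv (fst c)).
    + intros a b H. apply not_cyl_of_F; auto.
    + rewrite map_app, !reps_F by auto. apply NoDup_app.
      * apply NoDup_map_inj; [apply NoDup_zrange|]. intros u v _ _ E. injection E; auto.
      * apply NoDup_map_inj; [apply NoDup_zrange|]. intros u v _ _ E. injection E; auto.
      * intros p H1 H2. apply in_map_iff in H1, H2. destruct H1 as [u [<- _]]. destruct H2 as [v [E _]].
        injection E. intros _ E'. auto.
  - intros P RP. destruct (Hcov P RP) as [H|H].
    + destruct (reps_cover d th tv xA yA wA P Hd GA NA FA RP H) as [c [Hc Cc]].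
      exists c. split; auto. apply in_or_app. auto.
    + destruct (reps_cover d th tv xB yB wB P Hd GB NB FB RP H) as [c [Hc Cc]].
      exists c. split; auto. apply in_or_app. auto.
Qed.

Lemma hc_one d th tv xA yA wA : (0 < d)%nat ->
  good tv yA -> ~ on_slit th tv xA yA -> fl yA = 0%Z ->
  wA = INR d / IZR (Z.gcd (kval tv yA) (Z.of_nat d)) ->
  (forall P, reg_closed d th tv P -> fl (py P - IZR (fl (py P)) - tv) = fl (yA - tv)) ->
  horizontal_cylinders d th tv (reps d th tv xA yA wA).
Proof.
  intros Hd GA NA FA EA Hcov. split; [|split].
  - apply (reps_ok d th tv xA yA wA); auto.
  - apply FOP_nodup with (f := fun c => Finv d th tv (fst c)).
    + intros a b H. apply not_cyl_of_F; auto.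
    + rewrite reps_F by auto.
      apply NoDup_map_inj; [apply NoDup_zrange|]. intros u v _ _ E. injection E; auto.
  - intros P RP. apply reps_cover; auto.
Qed.

Lemma fl_py_shift y : fl (y - IZR (fl y)) = 0%Z.
Proof.
  replace (y - IZR (fl y)) with (y + IZR (- fl y)) by (rewrite opp_IZR; ring).
  rewrite fl_shift. lia.
Qed.

Theorem mainTheorem8 (d i : nat) (th tv : R) :
  (2 <= d)%nat -> (i < d)%nat ->
  (in_Ci d i th tv ->
     exists A B : list (pt * R),
       length A = Nat.gcd i d /\ length B = Nat.gcd (i + 1) d /\
       Forall (fun c => snd c = INR d / INR (Nat.gcd i d)) A /\
       Forall (fun c => snd c = INR d / INR (Nat.gcd (i + 1) d)) B /\
       horizontal_cylinders d th tv (A ++ B)) /\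
  (in_btm_Ci d i th tv ->
     exists A : list (pt * R),
       length A = Nat.gcd i d /\
       Forall (fun c => snd c = INR d / INR (Nat.gcd i d)) A /\
       horizontal_cylinders d th tv A).
Proof.
  intros Hd2 Hi. assert (Hd : (0 < d)%nat) by lia.
  assert (dnz : Z.of_nat d <> 0%Z) by lia.
  split.
  - intros [n [[Hn1 Hn2] Hmod]].
    set (yA := (1 + tv - IZR n) / 2). set (yB := (tv - IZR n) / 2).
    assert (FA : fl yA = 0%Z) by (apply fl_unique; unfold yA; simpl; lra).
    assert (FB : fl yB = 0%Z) by (apply fl_unique; unfold yB; simpl; lra).
    assert (FA' : fl (yA - tv) = (- n)%Z) by (apply fl_unique; unfold yA; rewrite opp_IZR; lra).
    assert (FB' : fl (yB - tv) = (- n - 1)%Z)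
      by (apply fl_unique; unfold yB; rewrite minus_IZR, opp_IZR; simpl; lra).
    assert (GA : good tv yA).
    { split; intros H; apply isZ_fl in H.
      - rewrite FA in H. unfold yA in H. simpl in H. lra.
      - rewrite FA', opp_IZR in H. unfold yA in H. lra. }
    assert (GB : good tv yB).
    { split; intros H; apply isZ_fl in H.
      - rewrite FB in H. unfold yB in H. simpl in H. lra.
      - rewrite FB', minus_IZR, opp_IZR in H. unfold yB in H. simpl in H. lra. }
    assert (KA : kval tv yA = n) by (unfold kval; rewrite FA, FA'; lia).
    assert (KB : kval tv yB = (n + 1)%Z) by (unfold kval; rewrite FB, FB'; lia).
    assert (gA : Z.gcd n (Z.of_nat d) = Z.of_nat (Nat.gcd i d)).
    { rewrite <- (Z.gcd_mod_l n). rewrite Hmod. symmetry. apply gcd_nat_Z. }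
    assert (gB : Z.gcd (n + 1) (Z.of_nat d) = Z.of_nat (Nat.gcd (i + 1) d)).
    { rewrite <- (Z.gcd_mod_l (n + 1)). rewrite <- Z.add_mod_idemp_l by auto. rewrite Hmod.
      rewrite Z.gcd_mod_l. rewrite gcd_nat_Z. rewrite Nat2Z.inj_add. reflexivity. }
    destruct (exists_offslit th tv yA GA) as [xA NA].
    destruct (exists_offslit th tv yB GB) as [xB NB].
    exists (reps d th tv xA yA (INR d / INR (Nat.gcd i d))),
           (reps d th tv xB yB (INR d / INR (Nat.gcd (i + 1) d))).
    split; [rewrite reps_len, KA, gA, Nat2Z.id; auto|].
    split; [rewrite reps_len, KB, gB, Nat2Z.id; auto|].
    split; [apply reps_snd|]. split; [apply reps_snd|].
    apply hc_two; auto.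
    + rewrite KA, KB. lia.
    + rewrite KA, gA, <- INR_IZR_INZ. reflexivity.
    + rewrite KB, gB, <- INR_IZR_INZ. reflexivity.
    + intros P _. rewrite FA', FB'. set (y := py P).
      pose proof (fl_py_shift y) as F0. destruct (fl_spec (y - IZR (fl y))) as [S1 S2].
      rewrite F0 in S1, S2. simpl in S1, S2.
      set (z := fl (y - IZR (fl y) - tv)). destruct (fl_spec (y - IZR (fl y) - tv)) as [T1 T2]. fold z in T1, T2.
      assert (L1 : (- n - 2 < z)%Z). { apply lt_IZR. rewrite minus_IZR, opp_IZR. simpl. lra. }
      assert (L2 : (z < 1 - n)%Z). { apply lt_IZR. rewrite minus_IZR. simpl. lra. }
      lia.
  - intros [[n [Htv Hmod]] _].
    set (yA := / 2).
    assert (FA : fl yA = 0%Z) by (apply fl_unique; unfold yA; simpl; lra).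
    assert (FA' : fl (yA - tv) = (- n)%Z).
    { replace (yA - tv) with (yA + IZR (- n)) by (rewrite Htv, opp_IZR; ring). rewrite fl_shift. lia. }
    assert (GA : good tv yA).
    { split; intros H.
      - apply isZ_fl in H. rewrite FA in H. unfold yA in H. simpl in H. lra.
      - replace (yA - tv) with (yA + IZR (- n)) in H by (rewrite Htv, opp_IZR; ring).
        apply isZ_plus in H. apply isZ_fl in H. rewrite FA in H. unfold yA in H. simpl in H. lra. }
    assert (KA : kval tv yA = n) by (unfold kval; rewrite FA, FA'; lia).
    assert (gA : Z.gcd n (Z.of_nat d) = Z.of_nat (Nat.gcd i d)).
    { rewrite <- (Z.gcd_mod_l n). rewrite Hmod. symmetry. apply gcd_nat_Z. }
    destruct (exists_offslit th tv yA GA) as [xA NA].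
    exists (reps d th tv xA yA (INR d / INR (Nat.gcd i d))).
    split; [rewrite reps_len, KA, gA, Nat2Z.id; auto|].
    split; [apply reps_snd|].
    apply hc_one; auto.
    + rewrite KA, gA, <- INR_IZR_INZ. reflexivity.
    + intros P _. rewrite FA'. set (y := py P).
      replace (y - IZR (fl y) - tv) with ((y - IZR (fl y)) + IZR (- n)) by (rewrite Htv, opp_IZR; ring).
      rewrite fl_shift, fl_py_shift. lia.
Qed.
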